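(* Let a vertex model on the periodic honeycomb lattice with period $1\times1$ have strictly positive signatures, be realizable, and satisfy Assumption (A). Let the realization produce odd matchgate signatures $(0,\gamma_1,\beta_1,0,\alpha_1,0,0,\delta_1)$ at the white vertex and $(0,\gamma_2,\beta_2,0,\alpha_2,0,0,\delta_2)$ at the black vertex, and set $a=\alpha_1\alpha_2$, $b=\beta_1\beta_2$, $c=\gamma_1\gamma_2$, $d=\delta_1\delta_2$. Then $$(a+b-c-d)(a+c-b-d)(a+d-b-c)>0\qquad\text{and}\qquad a+b+c+d>0.$$
   Context: Signatures are vectors indexed by local configurations $000,001,\dots,111$ of the incident $(a,b,c)$-edges. A realization assigns to each edge an invertible $2\times 2$ matrix $T_e$ (for period $1\times 1$ all edges of a type share one matrix) and to each vertex a matchgate signature $m_v$ with $m_v=(T_a\otimes T_b\otimes T_c)r_v$ at black and $m_v=((T_a\otimes T_b\otimes T_c)^t)^{-1}r_v$ at white vertices, satisfying the parity constraint; after relabelling bases one may assume all matchgates are odd, i.e. $m_v$ vanishes at $000,011,101,110$. Assumption (A): all entries of base change matrices are nonzero and all matchgate signature entries not forced to vanish by parity are nonzero. *)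

(* Defs.v *)
From HB Require Import structures.
From mathcomp Require Import all_boot all_order all_algebra.
Set Implicit Arguments. Unset Strict Implicit. Unset Printing Implicit Defensive.
Import Order.TTheory GRing.Theory Num.Theory.
Local Open Scope ring_scope.

(* Local configurations of the incident (a,b,c)-edges are indexed by
   i : 'I_8 read in binary: i = 4*x_a + 2*x_b + x_c, so 000,001,...,111
   correspond to 0,1,...,7. *)
Definition bit (k : nat) (i : 'I_8) : 'I_2 := inord ((i %/ 2 ^ k) %% 2).

Definition kron3 (R : pzRingType) (Ta Tb Tc : 'M[R]_2) : 'M[R]_8 :=
  \matrix_(i < 8, j < 8)
     (Ta (bit 2 i) (bit 2 j) * Tb (bit 1 i) (bit 1 j) * Tc (bit 0 i) (bit 0 j)).

Definition odd_sig (R : pzRingType) (al be ga de : R) : 'cV[R]_8 :=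
  \col_(i < 8) nth 0 [:: 0; ga; be; 0; al; 0; 0; de] i.

(* Main.v *)
Require Import Defs.
From HB Require Import structures.
From mathcomp Require Import all_boot all_order all_algebra.
From Stdlib Require Import Ring.
Import Order.TTheory GRing.Theory Num.Theory.
Set Implicit Arguments. Unset Strict Implicit. Unset Printing Implicit Defensive.
Local Open Scope ring_scope.


Lemma divn_iter_half k n : (n %/ 2 ^ k)%N = iter k half n.
Proof.
elim: k => [|k IH]; first by rewrite expn0 divn1.
by rewrite expnSr divnMA IH divn2 iterS.
Qed.

Lemma bitE k (i : 'I_8) : bit k i = if odd (iter k half i) then ord_max else ord0.
Proof.
apply: val_inj; rewrite /bit /= inordK; last by rewrite ltn_mod.
by rewrite modn2 divn_iter_half; case: odd.
Qed.

Lemma lift01 : lift ord0 (ord0 : 'I_1) = ord_max :> 'I_2.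
Proof. exact: val_inj. Qed.

Lemma bits_eq (i j : 'I_8) :
  [&& bit 2 i == bit 2 j, bit 1 i == bit 1 j & bit 0 i == bit 0 j] = (i == j).
Proof.
rewrite !bitE.
case: i => [[|[|[|[|[|[|[|[|i]]]]]]]] Hi] //;
case: j => [[|[|[|[|[|[|[|[|j]]]]]]]] Hj] //.
Qed.

Lemma bits_ex (x y z : 'I_2) : exists k : 'I_8, [/\ bit 2 k = x, bit 1 k = y & bit 0 k = z].
Proof.
have E2 (w : 'I_2) : w = if val w == 1%N then ord_max else ord0.
  by apply: val_inj; case: w => [[|[|w]]] //.
rewrite (E2 x) (E2 y) (E2 z).
case: (val x == 1%N); case: (val y == 1%N); case: (val z == 1%N).
- by exists (inord 7); rewrite !bitE inordK.
- by exists (inord 6); rewrite !bitE inordK.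
- by exists (inord 5); rewrite !bitE inordK.
- by exists (inord 4); rewrite !bitE inordK.
- by exists (inord 3); rewrite !bitE inordK.
- by exists (inord 2); rewrite !bitE inordK.
- by exists (inord 1); rewrite !bitE inordK.
- by exists (inord 0); rewrite !bitE inordK.
Qed.

Lemma kron3_1 (R : pzRingType) : kron3 (1%:M : 'M[R]_2) 1%:M 1%:M = 1%:M.
Proof.
apply/matrixP => i j; rewrite !mxE -!natrM !mulnb -bits_eq.
by case: (bit 2 i == _); case: (bit 1 i == _); case: (bit 0 i == _).
Qed.

Section RingTac.
Variable R : comPzRingType.
Definition radd (x y : R) : R := x + y.
Definition rmul (x y : R) : R := x * y.
Definition ropp (x : R) : R := - x.
Definition rsub (x y : R) : R := x - y.
Definition rzero : R := 0.
Definition rone : R := 1.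
Lemma Rth : @ring_theory R rzero rone radd rmul rsub ropp (@eq R).
Proof.
split; rewrite /radd /rmul /ropp /rsub /rzero /rone;
[exact: add0r|exact: addrC|exact: addrA|exact: mul1r|exact: mulrC|exact: mulrA|exact: mulrDl|by []|exact: subrr].
Qed.
Add Ring Rring : Rth.
Lemma raddE (x y : R) : x + y = radd x y. Proof. by []. Qed.
Lemma rmulE (x y : R) : x * y = rmul x y. Proof. by []. Qed.
Lemma roppE (x : R) : - x = ropp x. Proof. by []. Qed.
Lemma rzeroE : 0 = rzero :> R. Proof. by []. Qed.
Lemma roneE : 1 = rone :> R. Proof. by []. Qed.
Lemma rtwoE : 2%:R = radd rone rone :> R. Proof. by rewrite mulr2n. Qed.
Ltac myring := match goal with |- ?x = ?y => change (@eq R x y) end;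
  rewrite ?rtwoE ?raddE ?rmulE ?roppE ?rzeroE ?roneE; ring.

Lemma kron3_mul (A B C A' B' C' : 'M[R]_2) :
  kron3 A B C *m kron3 A' B' C' = kron3 (A *m A') (B *m B') (C *m C').
Proof.
apply/matrixP => i j; rewrite !mxE.
rewrite !big_ord_recl !big_ord0 !mxE !bitE /=.
rewrite !addr0 !lift01.
myring.
Qed.
Definition qf (u : 'cV[R]_8) (M : 'M[R]_8) (v : 'cV[R]_8) := (u^T *m M *m v) 0 0.

Lemma qfE u M v : qf u M v = \sum_i \sum_k u i 0 * M i k * v k 0.
Proof.
rewrite /qf mxE exchange_big /=; apply: eq_bigr => k _.
by rewrite mxE big_distrl /=; apply: eq_bigr => i _; rewrite mxE.
Qed.

Notation o0 := (@ord0 1).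
Notation o1 := (@ord_max 1).

Lemma qf_odd (al1 be1 ga1 de1 al2 be2 ga2 de2 : R) (A B C : 'M[R]_2) :
  qf (odd_sig al1 be1 ga1 de1) (kron3 A B C) (odd_sig al2 be2 ga2 de2) =
  ga1 * (A o0 o0 * B o0 o0 * C o1 o1) * ga2 +
  ga1 * (A o0 o0 * B o0 o1 * C o1 o0) * be2 +
  ga1 * (A o0 o1 * B o0 o0 * C o1 o0) * al2 +
  ga1 * (A o0 o1 * B o0 o1 * C o1 o1) * de2 +
  be1 * (A o0 o0 * B o1 o0 * C o0 o1) * ga2 +
  be1 * (A o0 o0 * B o1 o1 * C o0 o0) * be2 +
  be1 * (A o0 o1 * B o1 o0 * C o0 o0) * al2 +
  be1 * (A o0 o1 * B o1 o1 * C o0 o1) * de2 +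
  al1 * (A o1 o0 * B o0 o0 * C o0 o1) * ga2 +
  al1 * (A o1 o0 * B o0 o1 * C o0 o0) * be2 +
  al1 * (A o1 o1 * B o0 o0 * C o0 o0) * al2 +
  al1 * (A o1 o1 * B o0 o1 * C o0 o1) * de2 +
  de1 * (A o1 o0 * B o1 o0 * C o1 o1) * ga2 +
  de1 * (A o1 o0 * B o1 o1 * C o1 o0) * be2 +
  de1 * (A o1 o1 * B o1 o0 * C o1 o0) * al2 +
  de1 * (A o1 o1 * B o1 o1 * C o1 o1) * de2.
Proof.
rewrite qfE !big_ord_recl !big_ord0 !mxE !bitE /=.
rewrite !mul0r !mulr0 !add0r !addr0.
myring.
Qed.

Definition dg (x y : R) : 'M[R]_2 :=
  \matrix_(i, j) (if i == j then (if i == ord0 then x else y) else 0).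

Lemma qf_a (al1 be1 ga1 de1 al2 be2 ga2 de2 : R) (A : 'M[R]_2) :
  qf (odd_sig al1 be1 ga1 de1) (kron3 A 1%:M 1%:M) (odd_sig al2 be2 ga2 de2) =
  (be1 * be2 + ga1 * ga2) * A o0 o0 + (al1 * al2 + de1 * de2) * A o1 o1.
Proof. rewrite qf_odd !mxE /= ?mulr1n ?mulr0n; myring. Qed.

Lemma qf_b (al1 be1 ga1 de1 al2 be2 ga2 de2 : R) (B : 'M[R]_2) :
  qf (odd_sig al1 be1 ga1 de1) (kron3 1%:M B 1%:M) (odd_sig al2 be2 ga2 de2) =
  (ga1 * ga2 + al1 * al2) * B o0 o0 + (be1 * be2 + de1 * de2) * B o1 o1.
Proof. rewrite qf_odd !mxE /= ?mulr1n ?mulr0n; myring. Qed.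

Lemma qf_c (al1 be1 ga1 de1 al2 be2 ga2 de2 : R) (C : 'M[R]_2) :
  qf (odd_sig al1 be1 ga1 de1) (kron3 1%:M 1%:M C) (odd_sig al2 be2 ga2 de2) =
  (be1 * be2 + al1 * al2) * C o0 o0 + (ga1 * ga2 + de1 * de2) * C o1 o1.
Proof. rewrite qf_odd !mxE /= ?mulr1n ?mulr0n; myring. Qed.

Lemma qf_d (al1 be1 ga1 de1 al2 be2 ga2 de2 : R) (x0 x1 y0 y1 z0 z1 : R) :
  qf (odd_sig al1 be1 ga1 de1) (kron3 (dg x0 x1) (dg y0 y1) (dg z0 z1))
     (odd_sig al2 be2 ga2 de2) =
  ga1 * ga2 * (x0 * y0 * z1) + be1 * be2 * (x0 * y1 * z0) +
  al1 * al2 * (x1 * y0 * z0) + de1 * de2 * (x1 * y1 * z1).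
Proof. rewrite qf_odd !mxE /=; myring. Qed.


Lemma ord2P (w : 'I_2) : w = ord0 \/ w = ord_max.
Proof. by case: w => [[|[|w]]] Hw //; [left|right]; apply: val_inj. Qed.

Lemma mm2 (A B : 'M[R]_2) x y : (A *m B) x y = A x o0 * B o0 y + A x o1 * B o1 y.
Proof. by rewrite mxE !big_ord_recl big_ord0 addr0 lift01. Qed.

Lemma conj_delta (T T' : 'M[R]_2) i j x y :
  (T *m delta_mx i j *m T') x y = T x i * T' j y.
Proof.
rewrite !mm2 !mxE.
case: (ord2P i) => ->; case: (ord2P j) => ->; rewrite /= ?mulr1n ?mulr0n; myring.
Qed.


Lemma idY (Y s1 p00 p01 p10 p11 : R) :
  (Y * p00 + s1 - (Y * p11 + s1)) ^+ 2 + 4%:R * ((Y * p01) * (Y * p10)) =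
  Y ^+ 2 * (p00 + p11) ^+ 2 - 4%:R * (Y ^+ 2 * (p00 * p11 - p01 * p10)).
Proof. rewrite !expr2 (_ : 4%:R = 2%:R * 2%:R); last by rewrite -natrM. myring. Qed.

Lemma idN0 (Y s1 p00 p11 : R) :
  Y * (2%:R * p00 - 1) = (Y * p00 + s1 - (Y * p11 + s1)) + Y * ((p00 + p11) - 1).
Proof. myring. Qed.

Lemma idN1 (Y s1 p00 p11 : R) :
  Y * (2%:R * p11 - 1) = - (Y * p00 + s1 - (Y * p11 + s1)) + Y * ((p00 + p11) - 1).
Proof. myring. Qed.

Lemma idphi (s0 s1 a b c d : R) :
  s0 * (a * b) + s1 * (c * d) = (s0 - s1) * (b * a) + s1 * (b * a + d * c).
Proof. myring. Qed.


Lemma conjN (T T' : 'M[R]_2) (al be : R) : T *m T' = 1%:M ->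
  T *m (al%:M + be *: (2%:R *: (T' *m delta_mx ord0 ord0 *m T) - 1%:M)) *m T' =
  dg (al + be) (al - be).
Proof.
move=> h.
have hP : T *m (T' *m delta_mx ord0 ord0 *m T) *m T' = delta_mx ord0 ord0.
  by rewrite !mulmxA h mul1mx -mulmxA h mulmx1.
rewrite mulmxDr mulmxDl mul_mx_scalar -scalemxAl h -scalemxAr mulmxBr -scalemxAr.
rewrite mulmx1 -scalemxAl mulmxBl -scalemxAl hP h.
apply/matrixP => i j; rewrite !mxE.
by case: (ord2P i) => ->; case: (ord2P j) => ->; rewrite /= ?mulr0n ?mulr1n; myring.
Qed.

Lemma idcomm (a b c d : R) : (a * b) * (c * d) = (a * d) * (c * b).
Proof. myring. Qed.


Lemma idfinal (a b c d : R) :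
  (a + b - c - d) * (a + c - b - d) * (a + d - b - c) =
  ((b + a) - (c + d)) * ((c + a) - (b + d)) * - ((b + c) - (a + d)).
Proof. myring. Qed.

Lemma idsum (a b c d : R) : (b + c) * 1 + (a + d) * 1 = a + b + c + d.
Proof. myring. Qed.

End RingTac.



Lemma qf_pos (R : numDomainType) (u v : 'cV[R]_8) (M : 'M[R]_8) i0 k0 :
  (forall i, 0 < u i 0) -> (forall i, 0 < v i 0) ->
  (forall i k, 0 <= M i k) -> 0 < M i0 k0 -> 0 < qf u M v.
Proof.
move=> hu hv hM hM0; rewrite qfE (bigD1 i0) //= (bigD1 k0) //=.
have t1 : 0 < u i0 0 * M i0 k0 * v k0 0 by rewrite !mulr_gt0.
have ge0 i k : 0 <= u i 0 * M i k * v k 0 by rewrite !mulr_ge0 // ltW.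
rewrite ltr_wpDr //; first by apply: sumr_ge0 => i _; apply: sumr_ge0 => k _.
by rewrite ltr_wpDr // sumr_ge0.
Qed.

Lemma G_id (R : comUnitRingType) (Ta Tb Tc : 'M[R]_2) (rw rb mw mb : 'cV[R]_8) :
  Ta \in unitmx -> Tb \in unitmx -> Tc \in unitmx ->
  mw = invmx ((kron3 Ta Tb Tc)^T) *m rw -> mb = kron3 Ta Tb Tc *m rb ->
  forall Na Nb Nc, qf rw (kron3 Na Nb Nc) rb =
     qf mw (kron3 (Ta *m Na *m invmx Ta) (Tb *m Nb *m invmx Tb) (Tc *m Nc *m invmx Tc)) mb.
Proof.
move=> ua ub uc hw hb Na Nb Nc.
set K := kron3 Ta Tb Tc; set K' := kron3 (invmx Ta) (invmx Tb) (invmx Tc).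
have KK' : K *m K' = 1%:M by rewrite /K /K' kron3_mul !mulmxV // kron3_1.
have K'K : K' *m K = 1%:M by rewrite /K /K' kron3_mul !mulVmx // kron3_1.
have uK : K \in unitmx by case: (mulmx1_unit KK').
have erw : rw = K^T *m mw by rewrite hw mulKVmx // unitmx_tr.
have erb : rb = K' *m mb by rewrite hb mulmxA K'K mul1mx.
have -> : kron3 (Ta *m Na *m invmx Ta) (Tb *m Nb *m invmx Tb) (Tc *m Nc *m invmx Tc)
    = K *m kron3 Na Nb Nc *m K' by rewrite /K /K' !kron3_mul.
by rewrite /qf erw erb trmx_mul trmxK !mulmxA.
Qed.

Lemma sq_real (C : numClosedFieldType) (z D : C) : 0 < D -> z ^+ 2 = D -> z \is Num.real.
Proof.
move=> hD hz.
have : z ^+ 2 == sqrtC D ^+ 2 by rewrite sqrtCK hz.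
have hs : 0 <= sqrtC D by rewrite sqrtC_ge0 ltW.
by rewrite eqf_sqr => /orP[/eqP->|/eqP->]; rewrite ?rpredN ger0_real.
Qed.

Lemma core (C : numClosedFieldType) (Y s1 p00 p01 p10 p11 : C) :
  p00 + p11 = 1 -> p00 * p11 = p01 * p10 ->
  0 < Y * p00 + s1 -> 0 < Y * p11 + s1 -> 0 < Y * p01 -> 0 < Y * p10 ->
  [/\ Y \is Num.real, Y != 0, 0 < `|Y| + Y * (2%:R * p00 - 1)
    & 0 < `|Y| + Y * (2%:R * p11 - 1)].
Proof.
move=> hs hd hp hq hx hy.
set p := Y * p00 + s1 in hp *; set q := Y * p11 + s1 in hq *.
set x := Y * p01 in hx; set y := Y * p10 in hy.
have eY : Y ^+ 2 = (p - q) ^+ 2 + 4%:R * (x * y).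
  by rewrite idY hs hd subrr !mulr0 subr0 expr1n mulr1.
have rpq : p - q \is Num.real by rewrite rpredB // gtr0_real.
have sq0 : 0 <= (p - q) ^+ 2 by rewrite -real_normK // exprn_ge0.
have xy0 : 0 < 4%:R * (x * y) by apply: mulr_gt0; [rewrite ltr0n | apply: mulr_gt0].
have D0 : 0 < Y ^+ 2 by rewrite eY ltr_wpDl.
have rY : Y \is Num.real by exact: (sq_real D0 (erefl _)).
have nY : Y != 0 by apply: contraTneq D0 => ->; rewrite expr0n ltxx.
have lt : `|p - q| < `|Y|.
  rewrite -ltr_sqr ?nnegrE ?normr_ge0 // !real_normK // eY.
  by rewrite ltr_pwDr.
move: lt; rewrite real_ltr_norml // => /andP[l1 l2].
split => //.
  by rewrite (idN0 _ s1 _ p11) hs subrr mulr0 addr0 -/p -/q -ltrBlDr sub0r ltrNl.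
by rewrite (idN1 _ s1 p00) hs subrr mulr0 addr0 -/p -/q -ltrBlDr sub0r opprK.
Qed.

Lemma edge (C : numClosedFieldType) (T : 'M[C]_2) (s0 s1 : C) :
  T \in unitmx ->
  (forall i j, 0 < s0 * (T *m delta_mx i j *m invmx T) ord0 ord0 +
                   s1 * (T *m delta_mx i j *m invmx T) ord_max ord_max) ->
  [/\ s0 - s1 \is Num.real, s0 - s1 != 0 &
   exists N : 'M[C]_2, (forall i j, 0 < N i j) /\
     T *m N *m invmx T = dg (`|s0 - s1| + (s0 - s1)) (`|s0 - s1| - (s0 - s1))].
Proof.
move=> uT hpos.
set T' := invmx T; set Y := s0 - s1.
have e1 i j : T' j ord0 * T ord0 i + T' j ord_max * T ord_max i = (j == i)%:R.
  by rewrite -(mm2 T' T j i) mulVmx // mxE.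
have hphi i j : 0 < Y * (T' j ord0 * T ord0 i) + s1 * (j == i)%:R.
  by move: (hpos i j); rewrite !conj_delta idphi e1.
have hs : T' ord0 ord0 * T ord0 ord0 + T' ord_max ord0 * T ord0 ord_max = 1.
  have := mulmxV uT; move/matrixP/(_ ord0 ord0); rewrite mm2 mxE -/T' => E.
  by rewrite [T' ord0 _ * _]mulrC [T' ord_max _ * _]mulrC; exact: E.
have hd : (T' ord0 ord0 * T ord0 ord0) * (T' ord_max ord0 * T ord0 ord_max) =
          (T' ord0 ord0 * T ord0 ord_max) * (T' ord_max ord0 * T ord0 ord0).
  exact: idcomm.
have h00 := hphi ord0 ord0; have h11 := hphi ord_max ord_max.
have h01 := hphi ord_max ord0; have h10 := hphi ord0 ord_max.
rewrite /= mulr1 in h00 h11; rewrite /= ?mulr0n ?mulr0 ?addr0 in h01 h10; rewrite ?mulr0 ?addr0 in h10.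
have [rY nY n0 n1] := core hs hd h00 h11 h01 h10.
split => //.
exists (`|Y|%:M + Y *: (2%:R *: (T' *m delta_mx ord0 ord0 *m T) - 1%:M)).
split; last by rewrite conjN // mulmxV.
move=> i j.
have -> : (`|Y|%:M + Y *: (2%:R *: (T' *m delta_mx ord0 ord0 *m T) - 1%:M)) i j =
  `|Y| *+ (i == j) + Y * (2%:R * (T' *m delta_mx ord0 ord0 *m T) i j - (i == j)%:R).
  by rewrite !mxE.
rewrite conj_delta.
case: (ord2P i) => ->; case: (ord2P j) => ->; rewrite /= ?mulr1n ?mulr0n ?add0r ?subr0 //.
- by rewrite mulrCA mulr_gt0 ?ltr0n.
- by rewrite mulrCA mulr_gt0 ?ltr0n.
Qed.

Lemma sgcase (C : numClosedFieldType) (Y : C) : Y \is Num.real -> Y != 0 ->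
  (0 < Y /\ `|Y| = Y) \/ (Y < 0 /\ `|Y| = - Y).
Proof.
move=> rY nY; move: nY; rewrite real_neqr_lt ?rpred0 // => /orP[h|h].
  by right; split => //; exact: ltr0_norm.
by left; split => //; exact: gtr0_norm.
Qed.

Lemma sign_final (C : numClosedFieldType) (Ya Yb Yc a b c d : C) :
  Ya \is Num.real -> Yb \is Num.real -> Yc \is Num.real ->
  Ya != 0 -> Yb != 0 -> Yc != 0 ->
  0 < c * ((`|Ya| + Ya) * (`|Yb| + Yb) * (`|Yc| - Yc)) +
      b * ((`|Ya| + Ya) * (`|Yb| - Yb) * (`|Yc| + Yc)) +
      a * ((`|Ya| - Ya) * (`|Yb| + Yb) * (`|Yc| + Yc)) +
      d * ((`|Ya| - Ya) * (`|Yb| - Yb) * (`|Yc| - Yc)) ->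
  0 < Yc * Yb * - Ya.
Proof.
move=> ra rb rc na nb nc H.
rewrite mulrN oppr_gt0.
case: (sgcase ra na) => [[ha ea]|[ha ea]]; case: (sgcase rb nb) => [[hb eb]|[hb eb]];
case: (sgcase rc nc) => [[hc ec]|[hc ec]]; rewrite ?ea ?eb ?ec in H;
rewrite ?(subrr, addNr, mul0r, mulr0, add0r, addr0) in H;
try by rewrite ltxx in H.
all: first [rewrite (pmulr_llt0 _ ha) | rewrite (nmulr_llt0 _ ha)];
  first [rewrite (pmulr_llt0 _ hb) | rewrite (nmulr_llt0 _ hb) |
         rewrite (pmulr_lgt0 _ hb) | rewrite (nmulr_lgt0 _ hb)]; done.
Qed.



Lemma kron_ge0 (C : numDomainType) (A B D : 'M[C]_2) :
  (forall i j, 0 <= A i j) -> (forall i j, 0 <= B i j) -> (forall i j, 0 <= D i j) ->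
  forall x y, 0 <= kron3 A B D x y.
Proof. by move=> hA hB hD x y; rewrite mxE !mulr_ge0. Qed.

Lemma id_ge0 (C : numDomainType) (i j : 'I_2) : 0 <= (1%:M : 'M[C]_2) i j.
Proof. by rewrite mxE ler0n. Qed.

Lemma delta_ge0 (C : numDomainType) (i j x y : 'I_2) : 0 <= (delta_mx i j : 'M[C]_2) x y.
Proof. by rewrite mxE ler0n. Qed.

Theorem lemma4p2 (C : numClosedFieldType)
  (rw rb : 'cV[C]_8) (Ta Tb Tc : 'M[C]_2)
  (al1 be1 ga1 de1 al2 be2 ga2 de2 : C) :
  (* strictly positive signatures at the white and black vertex *)
  (forall i, 0 < rw i 0) -> (forall i, 0 < rb i 0) ->
  (* invertible base changes *)
  Ta \in unitmx -> Tb \in unitmx -> Tc \in unitmx ->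
  (* Assumption (A) *)
  (forall i j, Ta i j != 0) -> (forall i j, Tb i j != 0) ->
  (forall i j, Tc i j != 0) ->
  al1 != 0 -> be1 != 0 -> ga1 != 0 -> de1 != 0 ->
  al2 != 0 -> be2 != 0 -> ga2 != 0 -> de2 != 0 ->
  (* the realization: odd matchgates at white (1) and black (2) vertices *)
  odd_sig al1 be1 ga1 de1 = invmx ((kron3 Ta Tb Tc)^T) *m rw ->
  odd_sig al2 be2 ga2 de2 = kron3 Ta Tb Tc *m rb ->
  let a := al1 * al2 in let b := be1 * be2 in
  let c := ga1 * ga2 in let d := de1 * de2 in
  0 < (a + b - c - d) * (a + c - b - d) * (a + d - b - c) /\
  0 < a + b + c + d.
Proof.
move=> hw hb uTa uTb uTc _ _ _ _ _ _ _ _ _ _ _ ew eb a b c d.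
have G := G_id uTa uTb uTc ew eb.
have one (T : 'M[C]_2) : T \in unitmx -> T *m 1%:M *m invmx T = 1%:M.
  by move=> uT; rewrite mulmx1 mulmxV.
have Pos (Na Nb Nc : 'M[C]_2) i1 j1 i2 j2 i3 j3 :
    (forall i j, 0 <= Na i j) -> (forall i j, 0 <= Nb i j) -> (forall i j, 0 <= Nc i j) ->
    0 < Na i1 j1 -> 0 < Nb i2 j2 -> 0 < Nc i3 j3 ->
    0 < qf rw (kron3 Na Nb Nc) rb.
  move=> ha hb' hc pa pb pc.
  have [k [k2 k1 k0]] := bits_ex i1 i2 i3; have [l [l2 l1 l0]] := bits_ex j1 j2 j3.
  apply: (@qf_pos _ _ _ _ k l) => //; first exact: kron_ge0.
  by rewrite mxE k2 k1 k0 l2 l1 l0 !mulr_gt0.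
have dpos (i j : 'I_2) : 0 < (delta_mx i j : 'M[C]_2) i j by rewrite mxE !eqxx ltr01.
have ipos (i : 'I_2) : 0 < (1%:M : 'M[C]_2) i i by rewrite mxE eqxx ltr01.
have Ha : forall i j, 0 < (be1 * be2 + ga1 * ga2) * (Ta *m delta_mx i j *m invmx Ta) ord0 ord0 +
                        (al1 * al2 + de1 * de2) * (Ta *m delta_mx i j *m invmx Ta) ord_max ord_max.
  move=> i j; have := Pos _ _ _ i j ord0 ord0 ord0 ord0 (@delta_ge0 _ i j) (@id_ge0 _) (@id_ge0 _) (dpos i j) (ipos _) (ipos _).
  by rewrite G !one // qf_a.
have Hb : forall i j, 0 < (ga1 * ga2 + al1 * al2) * (Tb *m delta_mx i j *m invmx Tb) ord0 ord0 +
                        (be1 * be2 + de1 * de2) * (Tb *m delta_mx i j *m invmx Tb) ord_max ord_max.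
  move=> i j; have := Pos _ _ _ ord0 ord0 i j ord0 ord0 (@id_ge0 _) (@delta_ge0 _ i j) (@id_ge0 _) (ipos _) (dpos i j) (ipos _).
  by rewrite G !one // qf_b.
have Hc : forall i j, 0 < (be1 * be2 + al1 * al2) * (Tc *m delta_mx i j *m invmx Tc) ord0 ord0 +
                        (ga1 * ga2 + de1 * de2) * (Tc *m delta_mx i j *m invmx Tc) ord_max ord_max.
  move=> i j; have := Pos _ _ _ ord0 ord0 ord0 ord0 i j (@id_ge0 _) (@id_ge0 _) (@delta_ge0 _ i j) (ipos _) (ipos _) (dpos i j).
  by rewrite G !one // qf_c.
have [ra na [Na [pNa eNa]]] := edge uTa Ha.
have [rb' nb [Nb [pNb eNb]]] := edge uTb Hb.
have [rc nc [Nc [pNc eNc]]] := edge uTc Hc.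
have Pf : 0 < qf rw (kron3 Na Nb Nc) rb.
  apply: (Pos _ _ _ ord0 ord0 ord0 ord0 ord0 ord0) => // i j; exact: ltW.
rewrite G eNa eNb eNc qf_d in Pf.
split.
  rewrite /a /b /c /d idfinal.
  exact: (sign_final ra rb' rc na nb nc Pf).
have P1 : 0 < qf rw (kron3 1%:M 1%:M 1%:M) rb.
  apply: (Pos _ _ _ ord0 ord0 ord0 ord0 ord0 ord0) => //; exact: id_ge0.
rewrite G !one // qf_a !mxE /= in P1.
by rewrite /a /b /c /d -idsum.
Qed.
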